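(* Let $e_1,e_2,e_3,f_1,f_2,f_3$ be a coframe on a 6-manifold with $de_1=-2e_2\wedge e_3$, $df_1=-2f_2\wedge f_3$ and cyclically. For a parameter $t$ put $c_k=\cos(t+2\pi(k-1)/3)$, $s_k=\sin(t+2\pi(k-1)/3)$, and for constants $\lambda\neq0$, $a$, $b$ define \[X_{2k-1}=\lambda f_k+\lambda(ac_k+b)e_k,\qquad X_{2k}=4s_ke_k\qquad(k=1,2,3),\] $\xi=X_{12}+X_{34}+X_{56}$ and $\Xi=(X_1+iX_2)\wedge(X_3+iX_4)\wedge(X_5+iX_6)$ (here $X_{ab}=X_a\wedge X_b$, and $d$ is the exterior derivative on the 6-manifold, $t$ held fixed). Then there is a constant $\mu$ such that $d(\mathrm{Re}\,\Xi)=\frac{\mu}{2}\,\xi\wedge\xi$ holds for all $t$ if and only if either (i) $(a,b)=(0,-1)$ or $(0,0)$, in which case $\mu=-2/\lambda$; or (ii) $(a,b)=(\pm2,1)$, in which case $\mu=-\frac{\lambda^2+4}{2\lambda}$.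
   Context: The condition $d(\mathrm{Re}\,\Xi)=\frac\mu2\xi\wedge\xi$ is the nearly-half-flat condition for the $SU(3)$-structure $(\xi,\Xi)$ on the 6-dimensional orbits. *)

(* Defs.v *)
From HB Require Import structures.
From mathcomp Require Import all_boot all_order all_algebra.
From mathcomp Require Import all_classical all_reals.
From mathcomp Require Import trigo.
Set Implicit Arguments. Unset Strict Implicit. Unset Printing Implicit Defensive.
Import Order.TTheory GRing.Theory Num.Theory.
Local Open Scope ring_scope.

(* Constant-coefficient differential forms on the 6-manifold, expressed in the
   global coframe (e_1,e_2,e_3,f_1,f_2,f_3), indexed 0..5 in this order.
   A form is the (full) exterior algebra element sum_S w(S) e_S, where for
   S = {i_1 < ... < i_k}, e_S = e_{i_1} /\ ... /\ e_{i_k}. *)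
Notation form R := {ffun {set 'I_6} -> R}.

Section Forms.
Variable R : comNzRingType.

(* sign of e_A /\ e_B = sign * e_(A u B) for disjoint A, B *)
Definition shuffle_sign (A B : {set 'I_6}) : R :=
  (-1) ^+ #|[set p : 'I_6 * 'I_6 | [&& p.1 \in A, p.2 \in B & (p.2 < p.1)%N]]|.

Definition scalef (c : R) (a : form R) : form R := [ffun S => c * a S].

Definition wedge (a b : form R) : form R :=
  [ffun S : {set 'I_6} => \sum_(A : {set 'I_6} | A \subset S)
               shuffle_sign A (S :\: A) * a A * b (S :\: A)].

Definition basisf (A : {set 'I_6}) : form R := [ffun S : {set 'I_6} => (S == A)%:R].
Definition one_form (i : 'I_6) : form R := basisf [set i].

(* cyclic successor inside each block {0,1,2} (the e's) and {3,4,5} (the f's) *)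
Definition cyc (i : 'I_6) (k : nat) : 'I_6 :=
  inord (3 * (i %/ 3) + (i %% 3 + k) %% 3).

Definition dgen (i : 'I_6) : form R :=
  scalef (-2) (wedge (one_form (cyc i 1)) (one_form (cyc i 2))).

(* d on a basis monomial, by the graded Leibniz rule *)
Definition dbasis (A : {set 'I_6}) : form R :=
  \sum_(j in A)
     scalef ((-1) ^+ #|[set i in A | (i < j)%N]|)
       (wedge (wedge (basisf [set i in A | (i < j)%N]) (dgen j))
              (basisf [set i in A | (j < i)%N])).

Definition dform (a : form R) : form R := \sum_(A : {set 'I_6}) scalef (a A) (dbasis A).

(* complex-valued forms as pairs (real part, imaginary part) *)
Definition cwedge (x y : form R * form R) : form R * form R :=
  (wedge x.1 y.1 - wedge x.2 y.2, wedge x.1 y.2 + wedge x.2 y.1).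

End Forms.

Section Example.
Variable R : realType.

Definition e_ (k : 'I_3) : form R := one_form R (inord k).
Definition f_ (k : 'I_3) : form R := one_form R (inord (3 + k)).

(* k is 0-based: c_{k+1} = cos(t + 2 pi k / 3) *)
Definition ck (t : R) (k : 'I_3) : R := cos (t + 2 * pi * k%:R / 3).
Definition sk (t : R) (k : 'I_3) : R := sin (t + 2 * pi * k%:R / 3).

Definition Xodd (lam a b t : R) (k : 'I_3) : form R :=
  scalef lam (f_ k) + scalef (lam * (a * ck t k + b)) (e_ k).
Definition Xeven (t : R) (k : 'I_3) : form R := scalef (4 * sk t k) (e_ k).

Definition xi (lam a b t : R) : form R :=
  \sum_(k < 3) wedge (Xodd lam a b t k) (Xeven t k).

Definition Xc (lam a b t : R) (k : 'I_3) : form R * form R :=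
  (Xodd lam a b t k, Xeven t k).

Definition Xi (lam a b t : R) : form R * form R :=
  cwedge (cwedge (Xc lam a b t 0) (Xc lam a b t 1)) (Xc lam a b t 2).

End Example.

(* Main.v *)
Require Import Defs.
From HB Require Import structures.
From mathcomp Require Import all_boot all_order all_algebra.
From mathcomp Require Import all_classical all_reals.
From mathcomp Require Import trigo.
From mathcomp Require Import ring lra zify.
Import Order.TTheory GRing.Theory Num.Theory.
Local Open Scope ring_scope.
Section Gen.
Variable R : comNzRingType.
Implicit Types (x y z : {ffun {set 'I_6} -> R}) (A B S : {set 'I_6}).

Lemma wedgeDl x y z : wedge (x + y) z = wedge x z + wedge y z.
Proof.
apply/ffunP => S; rewrite !ffunE -big_split; apply: eq_bigr => A _.
by rewrite !ffunE mulrDr mulrDl.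
Qed.

Lemma wedgeDr x y z : wedge x (y + z) = wedge x y + wedge x z.
Proof.
apply/ffunP => S; rewrite !ffunE -big_split; apply: eq_bigr => A _.
by rewrite !ffunE mulrDr.
Qed.

Lemma wedge0l y : wedge 0 y = 0.
Proof. by apply/ffunP => S; rewrite !ffunE big1 // => A _; rewrite ffunE mulr0 mul0r. Qed.

Lemma wedge0r y : wedge y 0 = 0.
Proof. by apply/ffunP => S; rewrite !ffunE big1 // => A _; rewrite ffunE mulr0. Qed.

Lemma wedgeZl c x y : wedge (scalef c x) y = scalef c (wedge x y).
Proof.
apply/ffunP => S; rewrite !ffunE big_distrr; apply: eq_bigr => A _.
by rewrite ffunE mulrCA -!mulrA.
Qed.

Lemma wedgeZr c x y : wedge x (scalef c y) = scalef c (wedge x y).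
Proof.
apply/ffunP => S; rewrite !ffunE big_distrr; apply: eq_bigr => A _.
by rewrite ffunE mulrCA.
Qed.

Lemma scalefD c x y : scalef c (x + y) = scalef c x + scalef c y.
Proof. by apply/ffunP => S; rewrite !ffunE mulrDr. Qed.
Lemma scalef0 c : scalef c 0 = 0 :> {ffun {set 'I_6} -> R}.
Proof. by apply/ffunP => S; rewrite !ffunE mulr0. Qed.
Lemma scalefA c d x : scalef c (scalef d x) = scalef (c * d) x.
Proof. by apply/ffunP => S; rewrite !ffunE mulrA. Qed.

Lemma setUD_sub (A S : {set 'I_6}) : A \subset S -> A :|: (S :\: A) = S.
Proof.
move/fintype.subsetP=> sAS; apply/setP => x; rewrite !inE.
by case xA: (x \in A) => //=; rewrite sAS.
Qed.

Lemma disjD (A S : {set 'I_6}) : [disjoint A & (S :\: A)].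
Proof.
rewrite -setI_eq0; apply/eqP/setP => x; rewrite !inE.
by case: (x \in A); rewrite ?andbF.
Qed.

Lemma setUDK (A B : {set 'I_6}) : [disjoint A & B] -> (A :|: B) :\: A = B.
Proof.
rewrite -setI_eq0 => /eqP dAB; apply/setP => x; rewrite !inE.
move/setP: dAB => /(_ x); rewrite !inE.
by case: (x \in A); case: (x \in B).
Qed.

Lemma wedge_basis A B : wedge (basisf R A) (basisf R B) =
  if [disjoint A & B] then scalef (shuffle_sign R A B) (basisf R (A :|: B)) else 0.
Proof.
apply/ffunP => S; rewrite !ffunE.
rewrite (eq_bigr (fun C => if C == A then shuffle_sign R A (S :\: A) * ((S :\: A) == B)%:R else 0)); last first.
  move=> C _; rewrite !ffunE; case: eqP => [->|_]; first by rewrite mulr1.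
  by rewrite mulr0 mul0r.
case sAS: (A \subset S); last first.
  rewrite big1; last by move=> C sCS; case: eqP => // eCA; rewrite -eCA sCS in sAS.
  case: ifP => dAB; rewrite !ffunE //.
  case: (S =P A :|: B) => [eS|_]; last by rewrite /= mulr0n mulr0.
  by rewrite eS finset.subsetUl in sAS.
rewrite (bigD1 A) //= eqxx big1 ?addr0; last by move=> C /andP [_ /negPf ->].
case: eqP => [eB|nB].
  rewrite -eB disjD !ffunE setUD_sub // eqxx.
  by rewrite mulr1.
rewrite /= mulr0n mulr0; case: ifP => dAB; rewrite !ffunE //.
case: (S =P A :|: B) => [eS|_]; last by rewrite /= mulr0n mulr0.
by case: nB; rewrite eS setUDK.
Qed.
End Gen.

Inductive term := TV of nat | TC of int | TA of term & term | TM of term & term.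
Definition mask := seq bool.
Definition sform := seq (term * mask).
Local Open Scope nat_scope.
Definition mnth (s : mask) i := nth false s i.
Definition mnorm (s : mask) : mask := mkseq (mnth s) 6.
Definition munion (s1 s2 : mask) : mask := mkseq (fun i => mnth s1 i || mnth s2 i) 6.
Definition mdisj (s1 s2 : mask) := all (fun i => ~~ (mnth s1 i && mnth s2 i)) (iota 0 6).
Definition mcnt (s1 s2 : mask) : nat :=
  sumn [seq count (fun j => [&& mnth s1 i, mnth s2 j & j < i]) (iota 0 6) | i <- iota 0 6].
Definition msign s1 s2 : int := ((-1) ^+ mcnt s1 s2)%R.
Fixpoint swedge1 (p : term * mask) (l : sform) : sform :=
  match l with
  | [::] => [::]
  | q :: l' => if mdisj p.2 q.2 then (TM (TM (TC (msign p.2 q.2)) p.1) q.1, munion p.2 q.2) :: swedge1 p l'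
               else swedge1 p l'
  end.
Fixpoint swedge (l1 l2 : sform) : sform :=
  match l1 with [::] => [::] | p :: l1' => swedge1 p l2 ++ swedge l1' l2 end.
Definition sscale (c : term) (l : sform) : sform := map (fun p => (TM c p.1, p.2)) l.
Definition msingle n : mask := mkseq (fun i => i == n) 6.
Definition cycn (j k : nat) := 3 * (j %/ 3) + (j %% 3 + k) %% 3.
Definition sdgen j : sform :=
  sscale (TC (-2)%R) (swedge [:: (TC 1%R, msingle (cycn j 1))] [:: (TC 1%R, msingle (cycn j 2))]).
Definition mlo (s : mask) j : mask := mkseq (fun i => mnth s i && (i < j)) 6.
Definition mhi (s : mask) j : mask := mkseq (fun i => mnth s i && (j < i)) 6.
Definition mcard (s : mask) := count (mnth s) (iota 0 6).
Definition sdbasis (s : mask) : sform :=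
  flatten [seq sscale (TC ((-1) ^+ mcard (mlo s j))%R)
               (swedge (swedge [:: (TC 1%R, mlo s j)] (sdgen j)) [:: (TC 1%R, mhi s j)])
          | j <- [seq j <- iota 0 6 | mnth s j]].
Fixpoint sd (l : sform) : sform :=
  match l with [::] => [::] | p :: l' => sscale p.1 (sdbasis p.2) ++ sd l' end.
Fixpoint coeff (l : sform) (m : mask) : term :=
  match l with
  | [::] => TC 0%R
  | p :: l' => if mnorm p.2 == m then TA p.1 (coeff l' m) else coeff l' m
  end.
Definition keys (l1 l2 : sform) := undup (map (fun p => mnorm p.2) (l1 ++ l2)).
Local Close Scope nat_scope.

Lemma count_bigsum (T : Type) (a : pred T) (r : seq T) : count a r = (\sum_(x <- r) (a x : nat))%N.
Proof. by elim: r => [|x r IH]; rewrite ?big_nil ?big_cons //= IH. Qed.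
Lemma sumn_bigsum (T : Type) (f : T -> nat) (r : seq T) : sumn (map f r) = (\sum_(x <- r) f x)%N.
Proof. by elim: r => [|x r IH]; rewrite ?big_nil ?big_cons //= IH. Qed.

Definition setm (s : mask) : {set 'I_6} := [set i : 'I_6 | mnth s i].

Lemma card_setm s : (#|setm s| = mcard s)%N.
Proof.
rewrite /setm -sum1dep_card /mcard count_bigsum.
rewrite (big_mkcond (fun i : 'I_6 => mnth s i)).
rewrite -(big_mkord xpredT (fun i => if mnth s i then 1%N else 0%N)).
by apply: eq_bigr => i _; case: (mnth s i).
Qed.

Lemma setm_union s1 s2 : setm (munion s1 s2) = setm s1 :|: setm s2.
Proof. by apply/setP => i; rewrite !inE /munion /mnth nth_mkseq. Qed.

Lemma setm_norm s : setm (mnorm s) = setm s.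
Proof. by apply/setP => i; rewrite !inE /mnorm /mnth nth_mkseq. Qed.

Lemma setm_disj s1 s2 : [disjoint setm s1 & setm s2] = mdisj s1 s2.
Proof.
rewrite -setI_eq0; apply/eqP/allP.
  move/setP => h i; rewrite mem_iota /= => hi.
  by have := h (Ordinal hi); rewrite !inE /= => ->.
move=> h; apply/setP => i; rewrite !inE.
have := h i; rewrite mem_iota /= ltn_ord => /(_ isT); by case: (mnth s1 i && mnth s2 i).
Qed.

Lemma sum_iota6 (F : nat -> nat) : (\sum_(i <- iota 0 6) F i = \sum_(i < 6) F i)%N.
Proof. by rewrite -(big_mkord xpredT). Qed.

Lemma card_sign s1 s2 :
  (#|[set p : 'I_6 * 'I_6 | [&& p.1 \in setm s1, p.2 \in setm s2 & (p.2 < p.1)%N]]| = mcnt s1 s2)%N.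
Proof.
rewrite -sum1dep_card big_mkcond /=.
rewrite -(pair_bigA _ (fun i j => if [&& (i,j).1 \in setm s1, (i,j).2 \in setm s2 & ((i,j).2 < (i,j).1)%N] then 1%N else 0%N)) /=.
rewrite /mcnt sumn_bigsum sum_iota6.
apply: eq_bigr => i _; rewrite count_bigsum sum_iota6.
by apply: eq_bigr => j _; rewrite !inE; case: ([&& _, _ & _]).
Qed.

Lemma setm_sign (R : comNzRingType) s1 s2 : shuffle_sign R (setm s1) (setm s2) = (msign s1 s2)%:~R.
Proof. by rewrite /shuffle_sign card_sign /msign rmorphXn rmorphN1. Qed.


Section Eval.
Variable R : comNzRingType.
Variable env : nat -> R.
Local Notation F := {ffun {set 'I_6} -> R}.

Fixpoint evalT (t : term) : R :=
  match t with
  | TV n => env n | TC z => z%:~R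
  | TA u v => evalT u + evalT v | TM u v => evalT u * evalT v
  end.

Definition evalS (l : sform) : F := \sum_(p <- l) scalef (evalT p.1) (basisf R (setm p.2)).

Lemma evalS_nil : evalS [::] = 0.
Proof. by rewrite /evalS big_nil. Qed.
Lemma evalS_cons p l : evalS (p :: l) = scalef (evalT p.1) (basisf R (setm p.2)) + evalS l.
Proof. by rewrite /evalS big_cons. Qed.
Lemma evalS_cat l1 l2 : evalS (l1 ++ l2) = evalS l1 + evalS l2.
Proof. by rewrite /evalS big_cat. Qed.

Lemma scalefDl c d (x : F) : scalef (c + d) x = scalef c x + scalef d x.
Proof. by apply/ffunP => S; rewrite !ffunE mulrDl. Qed.
Lemma scalef0l (x : F) : scalef 0 x = 0.
Proof. by apply/ffunP => S; rewrite !ffunE mul0r. Qed.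
Lemma scalef1 (x : F) : scalef 1 x = x.
Proof. by apply/ffunP => S; rewrite !ffunE mul1r. Qed.
Lemma scalef_sum (I : Type) (r : seq I) (P : pred I) (G : I -> F) c :
  scalef c (\sum_(i <- r | P i) G i) = \sum_(i <- r | P i) scalef c (G i).
Proof. by apply: (big_morph _ (@scalefD R c) (@scalef0 R c)). Qed.

Lemma evalS_sscale c l : evalS (sscale c l) = scalef (evalT c) (evalS l).
Proof.
elim: l => [|p l IH]; first by rewrite /= !evalS_nil scalef0.
by rewrite /= !evalS_cons IH scalefD scalefA.
Qed.

Lemma wedge_sb c A d B :
  wedge (scalef c (basisf R A)) (scalef d (basisf R B)) =
  if [disjoint A & B] then scalef (shuffle_sign R A B * c * d) (basisf R (A :|: B)) else 0.
Proof.
rewrite wedgeZl wedgeZr wedge_basis; case: ifP => _; last by rewrite !scalef0.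
by rewrite !scalefA [c * d * _]mulrC mulrA.
Qed.

Lemma evalS_swedge1 p l :
  evalS (swedge1 p l) = wedge (scalef (evalT p.1) (basisf R (setm p.2))) (evalS l).
Proof.
elim: l => [|q l IH]; first by rewrite /= evalS_nil wedge0r.
rewrite /= evalS_cons wedgeDr -IH wedge_sb setm_disj.
case: ifP => _; last by rewrite add0r.
by rewrite evalS_cons /= setm_union setm_sign.
Qed.

Lemma evalS_swedge l1 l2 : evalS (swedge l1 l2) = wedge (evalS l1) (evalS l2).
Proof.
elim: l1 => [|p l1 IH]; first by rewrite /= evalS_nil wedge0l.
by rewrite /= evalS_cat evalS_cons wedgeDl IH evalS_swedge1.
Qed.

Lemma evalS_single c s : evalS [:: (c, s)] = scalef (evalT c) (basisf R (setm s)).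
Proof. by rewrite evalS_cons evalS_nil addr0. Qed.

Lemma evalS_flatten (I : Type) (f : I -> sform) r :
  evalS (flatten (map f r)) = \sum_(j <- r) evalS (f j).
Proof.
elim: r => [|x r IH]; first by rewrite big_nil evalS_nil.
by rewrite /= evalS_cat big_cons IH.
Qed.

Definition mask_of (S : {set 'I_6}) : mask := mkseq (fun i => inord i \in S) 6.

Lemma mnorm_eq s S : (mnorm s == mask_of S) = (setm s == S).
Proof.
apply/eqP/eqP => [e|e].
  rewrite -setm_norm e; apply/setP => i; rewrite !inE /mnth nth_mkseq //.
  by rewrite inord_val.
apply: (@eq_from_nth _ false); first by rewrite !size_mkseq.
move=> i; rewrite size_mkseq => hi.
by rewrite !nth_mkseq // -e inE /mnth inordK.
Qed.

Lemma coeffE l S : evalS l S = evalT (coeff l (mask_of S)).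
Proof.
elim: l => [|p l IH]; first by rewrite evalS_nil ffunE.
rewrite evalS_cons ffunE IH /= !ffunE mnorm_eq eq_sym.
by case: eqP => _ /=; rewrite ?mulr1 ?mulr0 ?add0r.
Qed.

Lemma coeff_notin l m : m \notin map (fun p => mnorm p.2) l -> coeff l m = TC 0.
Proof.
elim: l => [|p l IH] //=; rewrite inE negb_or => /andP [h1 h2].
by rewrite eq_sym (negPf h1) IH.
Qed.

Lemma evalS_eq l1 l2 :
  (forall m, m \in keys l1 l2 -> evalT (coeff l1 m) = evalT (coeff l2 m)) -> evalS l1 = evalS l2.
Proof.
move=> h; apply/ffunP => S; rewrite !coeffE.
case: (boolP (mask_of S \in keys l1 l2)) => [/h//|].
rewrite /keys mem_undup map_cat mem_cat negb_or => /andP [n1 n2].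
by rewrite !coeff_notin.
Qed.

End Eval.

Section DForm.
Variable R : comNzRingType.
Variable env : nat -> R.
Local Notation F := {ffun {set 'I_6} -> R}.
Local Notation evalS := (@evalS R env).
Local Notation evalT := (@evalT R env).

Lemma dformD (x y : F) : dform (x + y) = dform x + dform y.
Proof.
rewrite /dform -big_split; apply: eq_bigr => A _.
by rewrite ffunE scalefDl.
Qed.

Lemma dform0 : dform (0 : F) = 0.
Proof. by rewrite /dform big1 // => A _; rewrite ffunE scalef0l. Qed.

Lemma dformZ c (x : F) : dform (scalef c x) = scalef c (dform x).
Proof.
rewrite /dform scalef_sum; apply: eq_bigr => A _.
by rewrite ffunE scalefA.
Qed.

Lemma dform_basis A : dform (basisf R A) = dbasis R A.
Proof.
rewrite /dform (bigD1 A) //= ffunE eqxx scalef1 big1 ?addr0 //.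
by move=> B /negPf nB; rewrite ffunE nB scalef0l.
Qed.

Lemma TC1 : evalT (TC 1%R) = 1.
Proof. by rewrite /= rmorph1. Qed.

Lemma cycn_lt j k : (j < 6)%N -> (cycn j k < 6)%N.
Proof. rewrite /cycn; lia. Qed.

Lemma setm_single n : (n < 6)%N -> setm (msingle n) = [set inord n].
Proof.
move=> hn; apply/setP => i; rewrite !inE /mnth nth_mkseq //.
apply/eqP/eqP => [e|->]; last by rewrite inordK.
by apply/val_inj; rewrite /= inordK.
Qed.

Lemma dgen_sd j : (j < 6)%N -> dgen R (inord j) = evalS (sdgen j).
Proof.
move=> hj; rewrite /sdgen evalS_sscale evalS_swedge !evalS_single TC1 !scalef1.
rewrite !setm_single ?cycn_lt // /dgen /one_form /cyc inordK //.
Qed.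

Lemma setm_lo s j : (j < 6)%N -> [set i in setm s | (i < (inord j : 'I_6))%N] = setm (mlo s j).
Proof. by move=> hj; apply/setP => i; rewrite !inE /mnth nth_mkseq // inordK. Qed.
Lemma setm_hi s j : (j < 6)%N -> [set i in setm s | ((inord j : 'I_6) < i)%N] = setm (mhi s j).
Proof. by move=> hj; apply/setP => i; rewrite !inE /mnth nth_mkseq // inordK. Qed.

Lemma dbasis_sd s : dbasis R (setm s) = evalS (sdbasis s).
Proof.
rewrite /dbasis /sdbasis evalS_flatten.
rewrite (eq_bigl (fun j : 'I_6 => mnth s j)); last by move=> j; rewrite inE.
rewrite (eq_bigr (fun j : 'I_6 => (fun n : nat => scalef ((-1) ^+ #|[set i in setm s | (i < (inord n : 'I_6))%N]|)
       (wedge (wedge (basisf R [set i in setm s | (i < (inord n : 'I_6))%N]) (dgen R (inord n)))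
          (basisf R [set i in setm s | ((inord n : 'I_6) < i)%N]))) j)); last first.
  by move=> j _; rewrite inord_val.
rewrite big_filter -[iota 0 6]/(index_iota 0 6) big_mkord.
apply: eq_bigr => j _; have hj := ltn_ord j.
rewrite evalS_sscale !evalS_swedge !evalS_single TC1 !scalef1 -dgen_sd //.
by rewrite setm_lo // setm_hi // card_setm /= rmorphXn rmorphN1.
Qed.

Lemma evalS_sd l : dform (evalS l) = evalS (sd l).
Proof.
elim: l => [|p l IH]; first by rewrite evalS_nil dform0.
by rewrite evalS_cons /= evalS_cat dformD dformZ dform_basis IH evalS_sscale dbasis_sd.
Qed.
End DForm.

Definition sXodd (k : nat) : sform :=
  [:: (TV 0, msingle (3 + k)); (TM (TV 0) (TA (TM (TV 1) (TV (3 + k))) (TV 2)), msingle k)].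
Definition sXeven (k : nat) : sform := [:: (TM (TC 4%R) (TV (6 + k)), msingle k)].
Definition scwedge (x y : sform * sform) : sform * sform :=
  (swedge x.1 y.1 ++ sscale (TC (-1)%R) (swedge x.2 y.2), swedge x.1 y.2 ++ swedge x.2 y.1).
Definition sXi : sform * sform :=
  scwedge (scwedge (sXodd 0, sXeven 0) (sXodd 1, sXeven 1)) (sXodd 2, sXeven 2).
Definition sxi : sform :=
  swedge (sXodd 0) (sXeven 0) ++ (swedge (sXodd 1) (sXeven 1) ++ swedge (sXodd 2) (sXeven 2)).
Definition sL := sd sXi.1.
Definition sR := sscale (TV 9) (swedge sxi sxi).


Lemma mask_of_setm s : mask_of (setm s) = mnorm s.
Proof.
apply: (@eq_from_nth _ false); first by rewrite !size_mkseq.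
move=> i; rewrite size_mkseq => hi.
by rewrite !nth_mkseq // inE inordK.
Qed.

Lemma lincomb (R : comNzRingType) (x y k1 k2 k3 e1 e2 e3 res : R) :
  x - y = k1 * e1 + k2 * e2 + k3 * e3 + res -> e1 = 0 -> e2 = 0 -> e3 = 0 -> res = 0 -> x = y.
Proof. by move=> h e1z e2z e3z rz; apply/eqP; rewrite -subr_eq0 h e1z e2z e3z rz !mulr0 !addr0. Qed.

Lemma lincomb_inv (R : comNzRingType) (x y k1 k2 k3 e1 e2 e3 res : R) :
  x - y = k1 * e1 + k2 * e2 + k3 * e3 + res -> x = y -> e1 = 0 -> e2 = 0 -> e3 = 0 -> res = 0.
Proof. by move=> h xy e1z e2z e3z; move: h; rewrite xy subrr e1z e2z e3z !mulr0 !add0r. Qed.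

Section Trig.
Variable R : realType.
Definition w23 : R := 2 * pi / 3.
Local Notation w := w23.

Lemma cos_w : cos w = - (1 / 2).
Proof.
set x := cos w; set s := sin w.
have e3 : w + (w + w) = pi *+ 2 by rewrite mulr2n /w23; field.
have h3 : cos (w + (w + w)) = 4 * x ^+ 3 - 3 * x.
  rewrite !cosD !sinD -/x -/s.
  have s2 : s ^+ 2 = 1 - x ^+ 2 by rewrite sin2cos2.
  transitivity (x ^+ 3 - 3 * x * s ^+ 2); first ring.
  by rewrite s2; ring.
rewrite e3 cos2pi in h3.
have xlt : x < 1.
  rewrite /x -cos0; have := @ltr_cos R 0 w.
  rewrite !in_itv /= lexx pi_ge0 /w23 => -> //.
  - by rewrite divr_gt0 // mulr_gt0 // pi_gt0.
  - apply/andP; split; first by rewrite divr_ge0 // mulr_ge0 // pi_ge0.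
    by rewrite ler_pdivrMr //; have := @pi_ge0 R; lra.
have : (x - 1) * (2 * x + 1) ^+ 2 = 0.
  transitivity (4 * x ^+ 3 - 3 * x - 1); first ring.
  by rewrite -h3 subrr.
move/eqP; rewrite mulf_eq0 expf_eq0 /= => /orP [/eqP h|/eqP h].
  by move: xlt; rewrite -subr_lt0 h ltxx.
have -> : x = ((2 * x + 1) - 1) / 2 by field.
by rewrite h; field.
Qed.

Lemma sin_w2 : sin w ^+ 2 = 3 / 4.
Proof. by rewrite sin2cos2 cos_w; field. Qed.

Lemma trig_base (th : R) :
  [/\ cos (th + w) * cos (th - w) = cos th ^+ 2 - 3 / 4,
      sin (th + w) * sin (th - w) = 1 / 4 - cos th ^+ 2 &
      cos (th + w) + cos (th - w) + cos th = 0].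
Proof.
split.
- rewrite !cosD cosN sinN.
  transitivity (cos th ^+ 2 * cos w ^+ 2 - sin th ^+ 2 * sin w ^+ 2); first ring.
  by rewrite sin_w2 sin2cos2 cos_w; field.
- rewrite !sinD cosN sinN.
  transitivity (sin th ^+ 2 * cos w ^+ 2 - cos th ^+ 2 * sin w ^+ 2); first ring.
  by rewrite sin_w2 sin2cos2 cos_w; field.
- by rewrite !cosD cosN sinN cos_w; field.
Qed.
End Trig.
Section T2.
Variable R : realType.
Variable t : R.
Lemma ck_vals : [/\ ck t 0 = cos t, ck t 1 = cos (t + w23 R) & ck t 2 = cos (t + w23 R + w23 R)].
Proof.
rewrite /ck /w23 /=; split; congr cos.
- by rewrite mulr0 mul0r addr0.
- by rewrite (_ : (1 %% 3 = 1)%N) // mulr1.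
- by rewrite (_ : ((1 %% 3 + 1 %% 3) %% 3 = 2)%N) //; field.
Qed.
Lemma sk_vals : [/\ sk t 0 = sin t, sk t 1 = sin (t + w23 R) & sk t 2 = sin (t + w23 R + w23 R)].
Proof.
rewrite /sk /w23 /=; split; congr sin.
- by rewrite mulr0 mul0r addr0.
- by rewrite (_ : (1 %% 3 = 1)%N) // mulr1.
- by rewrite (_ : ((1 %% 3 + 1 %% 3) %% 3 = 2)%N) //; field.
Qed.

Lemma w3 : w23 R + w23 R + w23 R = pi *+ 2.
Proof. by rewrite mulr2n /w23; field. Qed.

Lemma key_facts :
  [/\ ck t 0 * ck t 1 = ck t 2 ^+ 2 - 3 / 4, sk t 0 * sk t 1 = 1 / 4 - ck t 2 ^+ 2 &
      ck t 0 + ck t 1 + ck t 2 = 0]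
  /\ [/\ ck t 2 * ck t 0 = ck t 1 ^+ 2 - 3 / 4 & sk t 2 * sk t 0 = 1 / 4 - ck t 1 ^+ 2]
  /\ [/\ ck t 1 * ck t 2 = ck t 0 ^+ 2 - 3 / 4 & sk t 1 * sk t 2 = 1 / 4 - ck t 0 ^+ 2].
Proof.
have [c0 c1 c2] := ck_vals; have [s0 s1 s2] := sk_vals.
have cper : forall x, cos (x + pi *+ 2) = cos x by move=> x; apply: cosD2pi.
have sper : forall x, sin (x + pi *+ 2) = sin x by move=> x; apply: sinD2pi.
rewrite c0 c1 c2 s0 s1 s2.
have [A1 A2 A3] := trig_base R (t + w23 R + w23 R).
have [B1 B2 B3] := trig_base R (t + w23 R).
have [C1 C2 C3] := trig_base R t.
have E1 : t + w23 R + w23 R + w23 R = t + pi *+ 2 by rewrite -w3 !addrA.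
have E2 : t + w23 R + w23 R - w23 R = t + w23 R by rewrite addrK.
have E3 : t + w23 R - w23 R = t by rewrite addrK.
have E4 : t - w23 R = t + w23 R + w23 R - pi *+ 2 by rewrite -w3; ring.
rewrite E1 E2 cper sper in A1 A2 A3.
rewrite E3 in B1 B2 B3.
rewrite E4 -[in cos (_ - pi *+ 2)]cper -[in sin (_ - pi *+ 2)]sper subrK in C1 C2 C3.
split; first by split => //; rewrite -A3; ring.
by split; split.
Qed.

End T2.

Section Concrete.
Variable R : realType.
Variables (lam a b mu t : R).

Definition envX : nat -> R := fun n =>
  nth 0 [:: lam; a; b; ck t 0; ck t 1; ck t 2; sk t 0; sk t 1; sk t 2; mu / 2] n.

Lemma envX_c (k : 'I_3) : envX (3 + k) = ck t k.
Proof. by case: k => [[|[|[|k]]] hk]. Qed.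
Lemma envX_s (k : 'I_3) : envX (6 + k) = sk t k.
Proof. by case: k => [[|[|[|k]]] hk]. Qed.

Lemma Xodd_eval (k : 'I_3) : Xodd lam a b t k = @evalS _ envX (sXodd k).
Proof.
have hk := ltn_ord k.
rewrite /Xodd /sXodd !evalS_cons evalS_nil addr0 /= envX_c.
by rewrite !setm_single //; lia.
Qed.

Lemma Xeven_eval (k : 'I_3) : Xeven t k = @evalS _ envX (sXeven k).
Proof.
have hk := ltn_ord k.
rewrite /Xeven /sXeven evalS_single /= envX_s.
rewrite !setm_single //; last lia.
Qed.

Lemma cwedge_eval x1 x2 y1 y2 :
  cwedge (@evalS _ envX x1, @evalS _ envX x2) (@evalS _ envX y1, @evalS _ envX y2) =
  (@evalS _ envX (scwedge (x1, x2) (y1, y2)).1, @evalS _ envX (scwedge (x1, x2) (y1, y2)).2).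
Proof.
have sN : forall z : {ffun {set 'I_6} -> R}, scalef (-1) z = - z.
  by move=> z; apply/ffunP => S; rewrite !ffunE mulN1r.
rewrite /cwedge /scwedge /= !evalS_cat evalS_sscale !evalS_swedge /=.
have -> : ((-1)%R : int)%:~R = -1 :> R by rewrite rmorphN rmorph1.
by rewrite sN.
Qed.

Lemma main_equiv :
  (dform (Xi lam a b t).1 = scalef (mu / 2) (wedge (xi lam a b t) (xi lam a b t))) <->
  @evalS _ envX sL = @evalS _ envX sR.
Proof.
have -> : Xi lam a b t = (@evalS _ envX sXi.1, @evalS _ envX sXi.2).
  by rewrite /Xi /Xc !Xodd_eval !Xeven_eval !cwedge_eval.
have -> : xi lam a b t = @evalS _ envX sxi.
  rewrite /xi !big_ord_recl big_ord0 addr0 !Xodd_eval !Xeven_eval -!evalS_swedge -!evalS_cat.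
  by [].
by rewrite /sL /sR evalS_sd evalS_sscale evalS_swedge.
Qed.

Definition resf (c : R) : R :=
  -2 * lam ^+ 3 * (a * c + b + a ^+ 2 * (c ^+ 2 - 3 / 4) - a * b * c + b ^+ 2)
  + (32 * lam + 16 * lam ^+ 2 * mu) * (1 / 4 - c ^+ 2).

Ltac vmc_coeff := match goal with |- context [coeff ?l ?m] =>
  let v := eval vm_compute in (coeff l m) in
  let E := fresh "E" in
  assert (E : coeff l m = v) by (vm_compute; reflexivity); rewrite E; clear E
  end.

Ltac key_tac K1 K2 K3 E1 E2 E3 RS :=
  vmc_coeff; vmc_coeff; rewrite /envX /=;
  apply: (@lincomb _ _ _ K1 K2 K3 E1 E2 E3 RS); [by rewrite /resf; field | | | | ].

Lemma backward : (forall c, resf c = 0) -> @evalS _ envX sL = @evalS _ envX sR.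
Proof.
move=> hres.
case: (key_facts R t) => [[F1 F2 F3] [[G1 G2] [H1 H2]]].
apply: evalS_eq => m.
have -> : keys sL sR = [:: [:: true; true; false; true; true; false];
           [:: true; false; true; true; false; true];
           [:: false; true; true; false; true; true]] by vm_compute.
rewrite !inE => /or3P [] /eqP ->.
- key_tac (-2 * lam ^+ 3 * a ^+ 2) (-2 * lam ^+ 3 * a * b) (32 * lam + 16 * lam ^+ 2 * mu)
      (ck t 0 * ck t 1 - (ck t 2 ^+ 2 - 3 / 4)) (ck t 0 + ck t 1 + ck t 2)
      (sk t 0 * sk t 1 - (1 / 4 - ck t 2 ^+ 2)) (resf (ck t 2)).
  + by rewrite F1 subrr.
  + exact: F3.
  + by rewrite F2 subrr.
  + exact: hres.
- key_tac (-2 * lam ^+ 3 * a ^+ 2) (-2 * lam ^+ 3 * a * b) (32 * lam + 16 * lam ^+ 2 * mu)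
      (ck t 2 * ck t 0 - (ck t 1 ^+ 2 - 3 / 4)) (ck t 0 + ck t 1 + ck t 2)
      (sk t 2 * sk t 0 - (1 / 4 - ck t 1 ^+ 2)) (resf (ck t 1)).
  + by rewrite G1 subrr.
  + exact: F3.
  + by rewrite G2 subrr.
  + exact: hres.
- key_tac (-2 * lam ^+ 3 * a ^+ 2) (-2 * lam ^+ 3 * a * b) (32 * lam + 16 * lam ^+ 2 * mu)
      (ck t 1 * ck t 2 - (ck t 0 ^+ 2 - 3 / 4)) (ck t 0 + ck t 1 + ck t 2)
      (sk t 1 * sk t 2 - (1 / 4 - ck t 0 ^+ 2)) (resf (ck t 0)).
  + by rewrite H1 subrr.
  + exact: F3.
  + by rewrite H2 subrr.
  + exact: hres.
Qed.

Lemma forward : @evalS _ envX sL = @evalS _ envX sR -> resf (ck t 2) = 0.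
Proof.
move=> H.
case: (key_facts R t) => [[F1 F2 F3] _].
have := congr1 (fun f : {ffun {set 'I_6} -> R} => f (setm [:: true; true; false; true; true; false])) H.
rewrite /= !coeffE mask_of_setm (_ : mnorm _ = [:: true; true; false; true; true; false]) //.
vmc_coeff; vmc_coeff; rewrite /envX /= => E.
apply: (@lincomb_inv _ _ _ (-2 * lam ^+ 3 * a ^+ 2) (-2 * lam ^+ 3 * a * b) (32 * lam + 16 * lam ^+ 2 * mu)
      (ck t 0 * ck t 1 - (ck t 2 ^+ 2 - 3 / 4)) (ck t 0 + ck t 1 + ck t 2)
      (sk t 0 * sk t 1 - (1 / 4 - ck t 2 ^+ 2)) (resf (ck t 2)) _ E).
- by by rewrite /resf; field.
- by rewrite F1 subrr.
- exact: F3.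
- by rewrite F2 subrr.
Qed.
End Concrete.

Theorem proposition5p1 (R : realType) (lam a b : R) (hlam : lam != 0) (mu : R) :
  (forall t : R,
     dform (Xi lam a b t).1 = scalef (mu / 2) (wedge (xi lam a b t) (xi lam a b t)))
  <->
  ((((a = 0 /\ b = -1) \/ (a = 0 /\ b = 0)) /\ mu = - 2 / lam)
   \/ (((a = 2 \/ a = -2) /\ b = 1) /\ mu = - (lam ^+ 2 + 4) / (2 * lam))).
Proof.
pose f := resf R lam a b mu.
split.
- move=> H.
  have hr : forall t : R, f (ck t 2) = 0.
    by move=> t; apply: forward; apply/main_equiv; exact: H.
  have hc : forall u : R, f (cos u) = 0.
    move=> u; have := hr (u - (w23 R + w23 R)).
    by case: (ck_vals R (u - (w23 R + w23 R))) => _ _ ->; rewrite -addrA subrK.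
  have r1 := hc 0; rewrite cos0 in r1.
  have rm1 := hc pi; rewrite cospi in rm1.
  have r0 := hc (pi / 2); rewrite cos_pihalf in r0.
  have l3 : lam ^+ 3 != 0 by rewrite expf_neq0.
  have eA : lam ^+ 3 * (a * (1 - b)) = 0.
    transitivity (- (f 1 - f (-1)) / 4); first by rewrite /f /resf; field.
    by rewrite r1 rm1 subrr oppr0 mul0r.
  have eK : 32 * lam + 16 * lam ^+ 2 * mu = -2 * lam ^+ 3 * a ^+ 2.
    transitivity (-2 * lam ^+ 3 * a ^+ 2 - (f 1 + f (-1) - 2 * f 0) / 2); first by rewrite /f /resf; field.
    by rewrite r1 rm1 r0 !mulr0 !addr0 subr0 mul0r subr0.
  have eB : lam ^+ 3 * (a ^+ 2 - 2 * (b + b ^+ 2)) = 0.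
    transitivity (f 0 - ((32 * lam + 16 * lam ^+ 2 * mu) + 2 * lam ^+ 3 * a ^+ 2) / 4).
      by rewrite /f /resf; field.
    by rewrite r0 eK; field.
  have emu : mu = (-2 * lam ^+ 3 * a ^+ 2 - 32 * lam) / (16 * lam ^+ 2).
    by rewrite -eK; field.
  move/eqP: eA; rewrite mulf_eq0 (negPf l3) /= mulf_eq0 => /orP [/eqP a0|].
    left; move/eqP: eB; rewrite mulf_eq0 (negPf l3) /= a0 => /eqP eb.
    split; last by rewrite emu a0; field.
    have : b * (1 + b) = 0.
      transitivity (- (0 ^+ 2 - 2 * (b + b ^+ 2)) / 2); first by field.
      by rewrite eb oppr0 mul0r.
    move/eqP; rewrite mulf_eq0 => /orP [/eqP -> | /eqP hb]; first by right.
    by left; split => //; apply/eqP; rewrite -subr_eq0 opprK addrC hb.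
  rewrite subr_eq0 => /eqP b1; right.
  move/eqP: eB; rewrite mulf_eq0 (negPf l3) /= -b1 => /eqP ea.
  have a4 : a ^+ 2 = 4.
    apply/eqP; rewrite -subr_eq0; apply/eqP.
    transitivity (a ^+ 2 - 2 * (1 + 1 ^+ 2)); first ring.
    exact: ea.
  split; last by rewrite emu a4; field.
  split => //.
  have : (a - 2) * (a + 2) = 0.
    transitivity (a ^+ 2 - 4); first ring.
    by rewrite a4 subrr.
  move/eqP; rewrite mulf_eq0 => /orP [/eqP h | /eqP h].
    by left; apply/eqP; rewrite -subr_eq0 h.
  by right; apply/eqP; rewrite -subr_eq0 opprK h.
- move=> hyp t; apply/main_equiv; apply: backward => c.
  case: hyp => [[[[-> ->]|[-> ->]] ->]|[[[->|->] ->] ->]]; by rewrite /resf; field.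
Qed.
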